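(* For the RCP model with queue feedback (parameters $C,a,b,\tau_1,\tau_2>0$, bifurcation parameter $\kappa$), the criticality of the Hopf bifurcation at $\kappa=\kappa_c$ (i.e. the sign of $\mu_2$) does not depend on the protocol parameter $a$, and there exist parameter values $b>0$, $\tau_1,\tau_2>0$ for which this Hopf bifurcation is sub-critical ($\mu_2<0$), in contrast with the model without queue feedback, for which it is always super-critical.
   Context: RCP model with queue feedback: $$\frac{d}{dt}R(t)=\kappa\,\frac{2aR(t)}{C(\tau_1+\tau_2)}\Big(C-y(t)-bC\,p\big(y(t)\big)\Big),\quad y(t)=R(t-\tau_1)+R(t-\tau_2),\quad p(y)=\frac{y}{2(C-y)},$$ with equilibrium $R^*=\frac{C(4+b-\sqrt{b^2+8b})}{8}$, linearization coefficient $\tilde a=\frac{a}{\tau_1+\tau_2}[1+2R^*/C]$, and critical value $\kappa_c=\dfrac{\pi}{2\tilde a(\tau_1+\tau_2)\cos\!\left(\frac{\pi(\tau_1-\tau_2)}{2(\tau_1+\tau_2)}\right)}$ at which the equilibrium loses stability via a Hopf bifurcation. $\mu_2=-\operatorname{Re}c_1(0)/\alpha'(0)$, where $c_1(0)$ is the first Lyapunov coefficient of the Hopf normal form at $\kappa_c$ and $\alpha'(0)=\operatorname{Re}(d\lambda/d\kappa)|_{\kappa_c}>0$; the bifurcation is super-critical if $\mu_2>0$ and sub-critical if $\mu_2<0$. The model without queue feedback is $\frac{d}{dt}R(t)=\kappa\,\frac{2aR(t)}{\gamma C(\tau_1+\tau_2)}(\gamma C-y(t))$, $\gamma\in(0,1]$.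 *)

(* Defs.v *)
From Stdlib Require Import Reals.
Open Scope R_scope.

Definition Cx : Type := (R * R)%type.
Definition cre (z : Cx) : R := fst z.
Definition cim (z : Cx) : R := snd z.
Definition cR (x : R) : Cx := (x, 0).
Definition cadd (z w : Cx) : Cx := (fst z + fst w, snd z + snd w).
Definition cmul (z w : Cx) : Cx :=
  (fst z * fst w - snd z * snd w, fst z * snd w + snd z * fst w).
Definition cscal (r : R) (z : Cx) : Cx := (r * fst z, r * snd z).
Definition cconj (z : Cx) : Cx := (fst z, - snd z).
Definition cinv (z : Cx) : Cx :=
  let n := fst z * fst z + snd z * snd z in (fst z / n, - snd z / n).
Definition cdiv (z w : Cx) : Cx := cmul z (cinv w).
Definition cexp (z : Cx) : Cx := (exp (fst z) * cos (snd z), exp (fst z) * sin (snd z)).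

(** We consider scalar delay equations (in the deviation u = R - R^* from an
    equilibrium)
        u'(t) = f(u(t), u(t-tau1) + u(t-tau2)),     f(0,0) = 0,
    where f is smooth.  A vector field of this type is described (up to order
    three, which is all that matters for the first Lyapunov coefficient) by its
    Taylor coefficients at the origin:  tXY = d^(X+Y) f / dx0^X ds^Y (0,0). *)
Record taylor3 : Type := Taylor3 {
  t10 : R; t01 : R;
  t20 : R; t11 : R; t02 : R;
  t30 : R; t21 : R; t12 : R; t03 : R }.

Definition tscale (k : R) (f : taylor3) : taylor3 :=
  Taylor3 (k * t10 f) (k * t01 f) (k * t20 f) (k * t11 f) (k * t02 f)
          (k * t30 f) (k * t21 f) (k * t12 f) (k * t03 f).

Section HopfDDE.
Variables (f : taylor3) (tau1 tau2 omega : R).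

Definition esum (lam : Cx) : Cx :=
  cadd (cexp (cscal (- tau1) lam)) (cexp (cscal (- tau2) lam)).

Definition charf (lam : Cx) : Cx :=
  cadd lam (cscal (-1) (cadd (cR (t10 f)) (cscal (t01 f) (esum lam)))).

Definition charf' (lam : Cx) : Cx :=
  cadd (cR 1) (cscal (t01 f)
     (cadd (cscal tau1 (cexp (cscal (- tau1) lam)))
           (cscal tau2 (cexp (cscal (- tau2) lam))))).

(** A (complexified) "history" is evaluated only through x0 = phi(0) and
    xs = phi(-tau1) + phi(-tau2); we represent it by this pair. *)
Definition Bform (x y : Cx * Cx) : Cx :=
  cadd (cscal (t20 f) (cmul (fst x) (fst y)))
  (cadd (cscal (t11 f) (cadd (cmul (fst x) (snd y)) (cmul (snd x) (fst y))))
        (cscal (t02 f) (cmul (snd x) (snd y)))).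

Definition Cform (x y z : Cx * Cx) : Cx :=
  let '(x0, xs) := x in let '(y0, ys) := y in let '(z0, zs) := z in
  cadd (cscal (t30 f) (cmul x0 (cmul y0 z0)))
  (cadd (cscal (t21 f) (cadd (cmul x0 (cmul y0 zs))
                        (cadd (cmul x0 (cmul ys z0)) (cmul xs (cmul y0 z0)))))
  (cadd (cscal (t12 f) (cadd (cmul x0 (cmul ys zs))
                        (cadd (cmul xs (cmul y0 zs)) (cmul xs (cmul ys z0)))))
        (cscal (t03 f) (cmul xs (cmul ys zs))))).

Definition iw : Cx := (0, omega).

(** critical eigenfunction q(theta) = e^{i omega theta} and its conjugate *)
Definition qv : Cx * Cx := (cR 1, esum iw).
Definition qvb : Cx * Cx := (cR 1, esum (cconj iw)).

(** second-order center-manifold terms (their components outside the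
    critical eigenspace):  h20(theta) = e^{2 i omega theta} B(q,q)/Delta(2 i omega),
    h11(theta) = B(q,qbar)/Delta(0). *)
Definition E20 : Cx := cdiv (Bform qv qv) (charf (cscal 2 iw)).
Definition h20 : Cx * Cx := (E20, cmul E20 (esum (cscal 2 iw))).
Definition E11 : Cx := cdiv (Bform qv qvb) (charf (cR 0)).
Definition h11 : Cx * Cx := (E11, cscal 2 E11).

(** first Lyapunov coefficient c1(0) of the Hopf normal form
      z' = i omega z + c1 z |z|^2 + ...
    (Hassard--Kazarinoff--Wan; the i/(2 omega)(...) part of their formula
    cancels exactly against the critical-eigenspace components of w20, w11):
      c1 = 1/(2 Delta'(i omega)) [ C(q,q,qbar) + B(qbar,h20) + 2 B(q,h11) ]. *)
Definition lyap1 : Cx :=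
  cscal (1/2) (cdiv (cadd (Cform qv qv qvb)
                     (cadd (Bform qvb h20) (cscal 2 (Bform qv h11))))
                    (charf' iw)).
End HopfDDE.

(** For a family u' = kappa * g(...), the transversality coefficient
    alpha'(0) = Re (d lambda / d kappa) at (kappa, lambda) = (kc, i omega),
    obtained by implicit differentiation of Delta_kappa(lambda) = 0:
      d lambda/d kappa = - (d Delta/d kappa) / (d Delta/d lambda). *)
Definition alpha' (g : taylor3) (kc tau1 tau2 omega : R) : R :=
  cre (cdiv (cadd (cR (t10 g)) (cscal (t01 g) (esum tau1 tau2 (iw omega))))
            (charf' (tscale kc g) tau1 tau2 (iw omega))).

Definition mu2 (g : taylor3) (kc tau1 tau2 omega : R) : R :=
  - cre (lyap1 (tscale kc g) tau1 tau2 omega) / alpha' g kc tau1 tau2 omega.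

(** critical value kappa_c for linearization u' = -kappa at (u(t-tau1)+u(t-tau2)),
    and the corresponding Hopf frequency omega = pi/(tau1+tau2). *)
Definition kappa_c (at_ tau1 tau2 : R) : R :=
  PI / (2 * at_ * (tau1 + tau2) * cos (PI * (tau1 - tau2) / (2 * (tau1 + tau2)))).
Definition omega_c (tau1 tau2 : R) : R := PI / (tau1 + tau2).

(** Vector field of the form g(x0,s) = K (Rs + x0) H(s) with H(s) = h(ystar + s),
    given K, Rs = equilibrium, and h, h', h'', h''' at ystar = 2 Rs. *)
Definition rcp_taylor (K Rs hy0 hy1 hy2 hy3 : R) : taylor3 :=
  Taylor3 (K * hy0) (K * Rs * hy1)
          0 (K * hy1) (K * Rs * hy2)
          0 0 (K * hy2) (K * Rs * hy3).

Definition p_queue (C y : R) : R := y / (2 * (C - y)).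
(* derivatives of p: p' = C/(2(C-y)^2), p'' = C/(C-y)^3, p''' = 3C/(C-y)^4 *)
Definition Rstar_q (C b : R) : R := C * (4 + b - sqrt (b ^ 2 + 8 * b)) / 8.
Definition atilde_q (C a b tau1 tau2 : R) : R :=
  a / (tau1 + tau2) * (1 + 2 * Rstar_q C b / C).
Definition g_queue (C a b tau1 tau2 : R) : taylor3 :=
  let Rs := Rstar_q C b in
  let y := 2 * Rs in
  rcp_taylor (2 * a / (C * (tau1 + tau2))) Rs
    (C - y - b * C * p_queue C y)
    (-1 - b * C * (C / (2 * (C - y) ^ 2)))
    (- b * C * (C / (C - y) ^ 3))
    (- b * C * (3 * C / (C - y) ^ 4)).
Definition mu2_queue (C a b tau1 tau2 : R) : R :=
  mu2 (g_queue C a b tau1 tau2) (kappa_c (atilde_q C a b tau1 tau2) tau1 tau2)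
      tau1 tau2 (omega_c tau1 tau2).

(** * RCP model without queue feedback:
      R' = kappa 2a R/(gamma C (tau1+tau2)) (gamma C - y), equilibrium Rstar = gamma C/2,
      linearization coefficient atilde = a/(tau1+tau2). *)
Definition Rstar_nq (C gamma : R) : R := gamma * C / 2.
Definition atilde_nq (a tau1 tau2 : R) : R := a / (tau1 + tau2).
Definition g_noqueue (C a gamma tau1 tau2 : R) : taylor3 :=
  let Rs := Rstar_nq C gamma in
  rcp_taylor (2 * a / (gamma * C * (tau1 + tau2))) Rs
    (gamma * C - 2 * Rs) (-1) 0 0.
Definition mu2_noqueue (C a gamma tau1 tau2 : R) : R :=
  mu2 (g_noqueue C a gamma tau1 tau2) (kappa_c (atilde_nq a tau1 tau2) tau1 tau2)
      tau1 tau2 (omega_c tau1 tau2).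

(* Main.v *)
Require Import Defs.
From Stdlib Require Import Reals Lra Lia Psatz.
Open Scope R_scope.

Lemma sqrt_b : sqrt ((1/28)^2 + 8*(1/28)) = 15/28.
Proof.
  replace ((1/28)^2 + 8*(1/28)) with ((15/28)*(15/28)) by field.
  apply sqrt_square; lra.
Qed.

Lemma Rstar_b C : Rstar_q C (1/28) = 7*C/16.
Proof. unfold Rstar_q; rewrite sqrt_b; field. Qed.

Lemma g_queue_b C a : 0 < C ->
  g_queue C a (1/28) 1 1 =
  rcp_taylor (a/C) (7*C/16) 0 (-15/7) (-128/(7*C)) (-3072/(7*C^2)).
Proof.
  intros HC. unfold g_queue, p_queue. rewrite Rstar_b.
  unfold rcp_taylor; f_equal; field; lra.
Qed.

Lemma kc_b C a : 0 < C -> 0 < a ->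
  kappa_c (atilde_q C a (1/28) 1 1) 1 1 = 4*PI/(15*a).
Proof.
  intros HC Ha. unfold kappa_c, atilde_q. rewrite Rstar_b.
  replace (PI * (1 - 1) / (2 * (1 + 1))) with 0 by field.
  rewrite cos_0. field. lra.
Qed.

Lemma f_b C a : 0 < C -> 0 < a ->
  tscale (kappa_c (atilde_q C a (1/28) 1 1) 1 1) (g_queue C a (1/28) 1 1) =
  Taylor3 0 (-PI/4) 0 (-4*PI/(7*C)) (-32*PI/(15*C)) 0 0
          (-512*PI/(105*C^2)) (-256*PI/(5*C^2)).
Proof.
  intros HC Ha. rewrite kc_b, g_queue_b by lra.
  unfold tscale, rcp_taylor; simpl; f_equal; field; lra.
Qed.

Lemma esum_gen t1 t2 x y : esum t1 t2 (x,y) =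
  (exp (-t1*x) * cos (-t1*y) + exp (-t2*x) * cos (-t2*y),
   exp (-t1*x) * sin (-t1*y) + exp (-t2*x) * sin (-t2*y)).
Proof. reflexivity. Qed.

Lemma e1 : esum 1 1 (iw (PI/(1+1))) = (0, -2).
Proof.
  unfold iw; rewrite esum_gen.
  replace (-(1)*0) with 0 by ring. replace (-(1)*(PI/(1+1))) with (-(PI/2)) by field.
  rewrite exp_0, cos_neg, sin_neg, cos_PI2, sin_PI2. f_equal; ring.
Qed.
Lemma e1c : esum 1 1 (cconj (iw (PI/(1+1)))) = (0, 2).
Proof.
  unfold iw, cconj; simpl; rewrite esum_gen.
  replace (-(1)*0) with 0 by ring. replace (-(1)*(-(PI/(1+1)))) with (PI/2) by field.
  rewrite exp_0, cos_PI2, sin_PI2. f_equal; ring.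
Qed.
Lemma e2 : esum 1 1 (cscal 2 (iw (PI/(1+1)))) = (-2, 0).
Proof.
  unfold iw, cscal; simpl; rewrite esum_gen.
  replace (-(1)*(2*0)) with 0 by ring. replace (-(1)*(2*(PI/(1+1)))) with (-PI) by field.
  rewrite exp_0, cos_neg, sin_neg, cos_PI, sin_PI. f_equal; ring.
Qed.
Lemma e0 : esum 1 1 (cR 0) = (2, 0).
Proof.
  unfold cR; rewrite esum_gen.
  replace (-(1)*0) with 0 by ring.
  rewrite exp_0, cos_0, sin_0. f_equal; ring.
Qed.
Lemma dchb f : charf' f 1 1 (iw (PI/(1+1))) = (1, - 2 * t01 f).
Proof.
  unfold charf', iw, cscal, cexp, cadd, cR; simpl.
  replace (-(1)*0) with 0 by ring. replace (-(1)*(PI/(1+1))) with (-(PI/2)) by field.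
  rewrite exp_0, cos_neg, sin_neg, cos_PI2, sin_PI2. f_equal; ring.
Qed.

Definition fb C := Taylor3 0 (-PI/4) 0 (-4*PI/(7*C)) (-32*PI/(15*C)) 0 0
          (-512*PI/(105*C^2)) (-256*PI/(5*C^2)).

Ltac crunch := unfold cdiv, cinv, lyap1; unfold Bform, Cform, iw, cadd, cmul, cscal, cdiv, cinv, cR, cre, cconj, fb;
  cbn beta iota zeta delta [fst snd t10 t01 t20 t11 t02 t30 t21 t12 t03].

Lemma E20_b C : 0 < C -> E20 (fb C) 1 1 (PI/(1+1)) = (-832/(525*C), -4064/(525*C)).
Proof.
  intros HC. pose proof PI_RGT_0.
  unfold E20, qv, charf. rewrite e1, e2. crunch. f_equal; field; split; nra.
Qed.
Lemma E11_b C : 0 < C -> E11 (fb C) 1 1 (PI/(1+1)) = (-256/(15*C), 0).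
Proof.
  intros HC. pose proof PI_RGT_0.
  unfold E11, qv, qvb, charf. rewrite e1, e1c, e0. crunch. f_equal; field; split; nra.
Qed.

Lemma lyap_b C : 0 < C ->
  cre (lyap1 (fb C) 1 1 (PI/(1+1)))
  = (1/2) * (PI/C^2) * (4129024/55125 + 3239168/55125 * (PI/2)) / (1 + PI^2/4).
Proof.
  intros HC. pose proof PI_RGT_0.
  unfold lyap1, h20, h11, qv, qvb.
  rewrite dchb, e1, e1c, e2, E20_b, E11_b by lra.
  crunch. field. split; nra.
Qed.


Section Gen.
Variables (f01 f11 t1 t2 w s e2 d1 d2 : R).
Let f := Taylor3 0 f01 0 f11 0 0 0 0 0.
Hypothesis HE1 : esum t1 t2 (iw w) = (0, -2*s).
Hypothesis HEc : esum t1 t2 (cconj (iw w)) = (0, 2*s).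
Hypothesis HE2 : esum t1 t2 (cscal 2 (iw w)) = (e2, 0).
Hypothesis HE0 : esum t1 t2 (cR 0) = (2, 0).
Hypothesis HD : charf' f t1 t2 (iw w) = (d1, d2).
Hypothesis Hw : w <> 0.
Hypothesis Hd2 : d2 <> 0.

Let p := - f01 * e2.
Let r := 2 * w.

Let n := p*p + r*r.
Let m := -4 * f11 * s.
Lemma n_nz : n <> 0.
Proof. unfold n, r. intro H. assert (w*w = 0) by nra. apply Hw. nra. Qed.
Lemma E20_g : E20 f t1 t2 w = (m*r/n, m*p/n).
Proof.
  pose proof n_nz. unfold n in *.
  unfold E20, qv, charf. rewrite HE1, HE2. unfold f, p, r, m in *. crunch. f_equal; field; auto.
Qed.
Lemma E11_g : E11 f t1 t2 w = (0, 0).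
Proof.
  unfold E11, qv, qvb, charf. rewrite HE1, HEc, HE0. unfold f. crunch. f_equal; ring.
Qed.
Let E20r := m*r/n.
Let E20i := m*p/n.
Let Nr := f11 * (E20r * e2 - 2 * s * E20i).
Let Ni := f11 * (E20r * (2*s) + E20i * e2).
Lemma lyap_g : cre (lyap1 f t1 t2 w) = (1/2) * (Nr*d1 + Ni*d2) / (d1*d1 + d2*d2).
Proof.
  assert (d1*d1+d2*d2 <> 0) by (intro; apply Hd2; nra).
  unfold lyap1, h20, h11, qv, qvb. rewrite HD, E20_g, E11_g, HE1, HEc, HE2.
  pose proof n_nz. unfold Nr, Ni, E20r, E20i. unfold f. crunch. field. auto.
Qed.
Lemma alpha_g g kc : t10 g = 0 -> tscale kc g = f ->
  alpha' g kc t1 t2 w = (-2 * s * t01 g) * d2 / (d1*d1 + d2*d2).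
Proof.
  intros H10 Hf.
  assert (d1*d1+d2*d2 <> 0) by (intro; apply Hd2; nra).
  unfold alpha'. rewrite Hf, HD, HE1, H10. crunch. field. auto.
Qed.
Lemma mu2_pos_g g kc : t10 g = 0 -> tscale kc g = f ->
  0 < s -> 0 < d2 -> t01 g < 0 -> f11 <> 0 ->
  0 < (r * e2 - 2 * s * p) * d1 + (2 * s * r + p * e2) * d2 ->
  0 < mu2 g kc t1 t2 w.
Proof.
  intros H10 Hf Hs Hd Hg Hf11 HY.
  pose proof n_nz as Hn.
  assert (Hn' : 0 < n) by (unfold n in *; nra).
  assert (HD2 : 0 < d1*d1+d2*d2) by nra.
  unfold mu2. rewrite (alpha_g g kc) by auto. rewrite Hf, lyap_g.
  unfold Nr, Ni, E20r, E20i, m.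
  replace (- (1 / 2 * (f11 * (-4 * f11 * s * r / n * e2 - 2 * s * (-4 * f11 * s * p / n)) * d1 +
        f11 * (-4 * f11 * s * r / n * (2 * s) + -4 * f11 * s * p / n * e2) * d2) /
      (d1 * d1 + d2 * d2)) / (-2 * s * t01 g * d2 / (d1 * d1 + d2 * d2)))
   with ((f11*f11) * ((r * e2 - 2 * s * p) * d1 + (2 * s * r + p * e2) * d2) / (n * (- t01 g) * d2))
   by (field; repeat split; lra).
  apply Rdiv_lt_0_compat.
  - apply Rmult_lt_0_compat; auto. nra.
  - apply Rmult_lt_0_compat; auto. apply Rmult_lt_0_compat; lra.
Qed.
End Gen.


Lemma bracket_pos s c z : s*s + c*c = 1 -> 0 < s -> 0 <= z -> z <= PI/2 ->
  0 < (c*c - s*s) * (s + z) + (2*s*s + (c*c-s*s)*(c*c-s*s)) * (PI/2).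
Proof.
  intros H1 Hs Hz0 Hz1. pose proof PI2_3_2.
  replace (c*c) with (1 - s*s) by lra.
  assert (s <= 1) by nra.
  destruct (Rle_lt_dec 0 (1 - 2*s*s)) as [Hc|Hc].
  - assert (0 <= (1 - s*s - s*s) * (s+z)) by nra.
    assert (0 < (2*s*s + (1-s*s-s*s)*(1-s*s-s*s))) by nra. nra.
  - assert ((1 - s*s - s*s) * (s+z) >= (1 - s*s - s*s) * (1 + PI/2)) by nra.
    assert (0 < 4*(s*s)*(s*s) - 4*(s*s) + 2) by nra.
    assert ((2*s*s + (1-s*s-s*s)*(1-s*s-s*s)) * (PI/2) >= (2*s*s + (1-s*s-s*s)*(1-s*s-s*s)) * (3/2)) by nra.
    nra.
Qed.

Lemma part3 C a gamma t1 t2 :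
      0 < C -> 0 < a -> 0 < gamma -> gamma <= 1 -> 0 < t1 -> 0 < t2 ->
      0 < mu2_noqueue C a gamma t1 t2.
Proof.
  intros HC Ha Hg Hg1 H1 H2.
  pose proof PI_RGT_0 as HPI. pose proof PI2_3_2 as HPI3.
  set (T := t1 + t2).
  set (w := PI / T).
  set (al := t1 * w).
  assert (HT : 0 < T) by (unfold T; lra).
  assert (Hal0 : 0 < al) by (unfold al, w; apply Rmult_lt_0_compat; [lra| apply Rdiv_lt_0_compat; lra]).
  assert (Ht2w : t2 * w = PI - al) by (unfold al, w, T in *; field; lra).
  assert (Hal1 : al < PI).
  { assert (0 < t2 * w) by (unfold w; apply Rmult_lt_0_compat; [lra| apply Rdiv_lt_0_compat; lra]). lra. }
  set (s := sin al). set (c := cos al).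
  assert (Hs : 0 < s) by (apply sin_gt_0; lra).
  assert (Hsc : s*s + c*c = 1) by (pose proof (sin2_cos2 al); unfold Rsqr in *; unfold s, c; lra).
  assert (Hcosphi : cos (PI * (t1 - t2) / (2 * (t1 + t2))) = s).
  { replace (PI * (t1 - t2) / (2 * (t1 + t2))) with (PI/2 - (PI - al)) by (unfold al, w, T in *; field; lra).
    rewrite cos_shift, sin_PI_x. reflexivity. }
  set (g := g_noqueue C a gamma t1 t2).
  set (kc := kappa_c (atilde_nq a t1 t2) t1 t2).
  set (f01 := kc * t01 g). set (f11 := kc * t11 g).
  assert (Hkc : kc = PI / (2 * a * s)).
  { unfold kc, kappa_c, atilde_nq. rewrite Hcosphi. fold T. field. repeat split; lra. }
  assert (Hf01 : f01 = - PI / (2 * T * s)).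
  { unfold f01, g, g_noqueue, rcp_taylor, Rstar_nq. cbn [t01]. rewrite Hkc. fold T. field.
    repeat split; lra. }
  assert (Hf11 : f11 = - PI / (a * s) * (a / (gamma * C * T))).
  { unfold f11, g, g_noqueue, rcp_taylor, Rstar_nq. cbn [t11]. rewrite Hkc. fold T. field.
    repeat split; lra. }
  assert (Htf : tscale kc g = Taylor3 0 f01 0 f11 0 0 0 0 0).
  { unfold f01, f11, g, g_noqueue, rcp_taylor, tscale. cbn. unfold Rstar_nq. f_equal; (field; repeat split; lra). }
  assert (H10 : t10 g = 0) by (unfold g, g_noqueue, rcp_taylor, Rstar_nq; cbn; field; repeat split; lra).
  assert (Hg01 : t01 g < 0).
  { unfold g, g_noqueue, rcp_taylor, Rstar_nq; cbn.
    replace (2 * a / (gamma * C * (t1 + t2)) * (gamma * C / 2) * -1) with (- (a / T)) by (unfold T; field; repeat split; lra).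
    assert (0 < a / T) by (apply Rdiv_lt_0_compat; lra). lra. }
  assert (Hd2v : f01 * (- t1 * s - t2 * s) = PI/2) by (rewrite Hf01; unfold T; field; split; lra).
  unfold mu2_noqueue. fold g kc. fold T. fold w.
  replace (omega_c t1 t2) with w by reflexivity.
  assert (Hnegw1 : - t1 * w = - al) by (unfold al; ring).
  assert (Hnegw2 : - t2 * w = - (PI - al)) by lra.
  apply (mu2_pos_g f01 f11 t1 t2 w s (2*(c*c - s*s)) (1 + f01*(t1*c - t2*c)) (f01*(-t1*s - t2*s))).
  - unfold iw. rewrite esum_gen. rewrite Hnegw1, Hnegw2, !Rmult_0_r, exp_0, !cos_neg, !sin_neg,
      Rtrigo_facts.cos_pi_minus, sin_PI_x. fold s c. f_equal; ring.
  - unfold iw, cconj; cbn [fst snd]. rewrite esum_gen.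
    replace (-t1 * - w) with al by (unfold al; ring).
    replace (-t2 * - w) with (PI - al) by lra.
    rewrite !Rmult_0_r, ?Ropp_0, exp_0, Rtrigo_facts.cos_pi_minus, sin_PI_x. fold s c. f_equal; ring.
  - unfold iw, cscal; cbn [fst snd]. rewrite esum_gen.
    replace (-t1 * (2*w)) with (-(2*al)) by (unfold al; ring).
    replace (-t2 * (2*w)) with (2*al - 2*PI) by lra.
    rewrite !Rmult_0_r, ?Ropp_0, exp_0, cos_neg, sin_neg, cos_minus, sin_minus, cos_2PI, sin_2PI, cos_2a, sin_2a.
    fold s c. f_equal; ring.
  - unfold cR. rewrite esum_gen. rewrite !Rmult_0_r, ?Ropp_0, exp_0, cos_0, sin_0. f_equal; ring.
  - unfold charf', iw, cscal, cexp, cadd, cR; cbn [fst snd t01].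
    rewrite Hnegw1, Hnegw2, !Rmult_0_r, exp_0, !cos_neg, !sin_neg,
      Rtrigo_facts.cos_pi_minus, sin_PI_x. fold s c. f_equal; ring.
  - unfold w. apply Rgt_not_eq, Rdiv_lt_0_compat; lra.
  - rewrite Hd2v. lra.
  - exact H10.
  - exact Htf.
  - exact Hs.
  - rewrite Hd2v. lra.
  - exact Hg01.
  - rewrite Hf11. apply Rlt_not_eq.
    assert (0 < PI / (a * s)) by (apply Rdiv_lt_0_compat; nra).
    assert (0 < a / (gamma * C * T)) by (apply Rdiv_lt_0_compat; [lra | apply Rmult_lt_0_compat; nra]).
    replace (- PI / (a * s)) with (- (PI / (a * s))) by (field; split; lra). nra.
  - replace (((2 * w * (2 * (c * c - s * s)) - 2 * s * (- f01 * (2 * (c * c - s * s)))) * (1 + f01 * (t1 * c - t2 * c)) +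
        (2 * s * (2 * w) + - f01 * (2 * (c * c - s * s)) * (2 * (c * c - s * s))) * (f01 * (- t1 * s - t2 * s))))
      with ((4*(PI/(2*T*s))) * ((c*c - s*s)*(s + (PI/2 - al)*c) + (2*s*s + (c*c-s*s)*(c*c-s*s))*(PI/2)))
      by (rewrite Hf01; unfold al, w, T in *; field; split; lra).
    apply Rmult_lt_0_compat.
    + assert (0 < PI/(2*T*s)) by (apply Rdiv_lt_0_compat; nra). lra.
    + apply bracket_pos; auto.
      * destruct (Rle_lt_dec al (PI/2)).
        -- assert (0 <= c) by (apply cos_ge_0; lra). nra.
        -- assert (c <= 0) by (apply cos_le_0; lra). nra.
      * pose proof (COS_bound al). fold c in H. nra.
Qed.

Definition rcp2 (kK Rs h0 h1 h2 h3 : R) : taylor3 :=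
  Taylor3 (kK*h0) (kK*Rs*h1) 0 (kK*h1) (kK*Rs*h2) 0 0 (kK*h2) (kK*Rs*h3).

Lemma tscale_rcp k K Rs h0 h1 h2 h3 :
  tscale k (rcp_taylor K Rs h0 h1 h2 h3) = rcp2 (k*K) Rs h0 h1 h2 h3.
Proof. unfold tscale, rcp_taylor, rcp2; cbn; f_equal; ring. Qed.

Lemma kK_scale C a b t1 t2 : a <> 0 ->
  kappa_c (atilde_q C a b t1 t2) t1 t2 * (2 * a / (C * (t1 + t2))) =
  kappa_c (atilde_q C 1 b t1 t2) t1 t2 * (2 * 1 / (C * (t1 + t2))).
Proof.
  intros Ha. unfold kappa_c, atilde_q.
  set (Z := 1 + 2 * Rstar_q C b / C).
  set (Y := cos (PI * (t1 - t2) / (2 * (t1 + t2)))).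
  set (T := t1 + t2).
  replace (2 * (a / T * Z) * T * Y) with (a * (2 * (1 / T * Z) * T * Y)) by (unfold Rdiv; ring).
  unfold Rdiv at 1. rewrite Rinv_mult.
  replace (PI * (/ a * / (2 * (1 / T * Z) * T * Y)) * (2 * a / (C * T)))
    with ((/ a * a) * (PI / (2 * (1 / T * Z) * T * Y) * (2 / (C * T)))) by (unfold Rdiv; ring).
  rewrite Rinv_l by exact Ha. unfold Rdiv; ring.
Qed.

Lemma cre_cdiv_scal a N D : cre (cdiv (cscal a N) D) = a * cre (cdiv N D).
Proof. unfold cre, cdiv, cmul, cscal, cinv; cbn; ring. Qed.

Lemma mu2_scale C a b t1 t2 : a <> 0 ->
  mu2_queue C a b t1 t2 = mu2_queue C 1 b t1 t2 / a.
Proof.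
  intros Ha. unfold mu2_queue, mu2, alpha'.
  assert (Hg : tscale (kappa_c (atilde_q C a b t1 t2) t1 t2) (g_queue C a b t1 t2) =
               tscale (kappa_c (atilde_q C 1 b t1 t2) t1 t2) (g_queue C 1 b t1 t2)).
  { unfold g_queue. cbv zeta. rewrite !tscale_rcp, kK_scale by exact Ha. reflexivity. }
  rewrite Hg.
  replace (cadd (cR (t10 (g_queue C a b t1 t2)))
             (cscal (t01 (g_queue C a b t1 t2)) (esum t1 t2 (iw (omega_c t1 t2)))))
    with (cscal a (cadd (cR (t10 (g_queue C 1 b t1 t2)))
             (cscal (t01 (g_queue C 1 b t1 t2)) (esum t1 t2 (iw (omega_c t1 t2))))))
    by (unfold g_queue, rcp_taylor, cscal, cadd, cR; cbn; f_equal; unfold Rdiv; ring).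
  rewrite cre_cdiv_scal.
  unfold Rdiv. rewrite Rinv_mult. ring.
Qed.

Lemma part1 C a a' b t1 t2 :
      0 < C -> 0 < a -> 0 < a' -> 0 < b -> 0 < t1 -> 0 < t2 ->
      (0 < mu2_queue C a b t1 t2 <-> 0 < mu2_queue C a' b t1 t2) /\
      (mu2_queue C a b t1 t2 < 0 <-> mu2_queue C a' b t1 t2 < 0).
Proof.
  intros HC Ha Ha' Hb H1 H2.
  rewrite (mu2_scale C a), (mu2_scale C a') by lra.
  set (m := mu2_queue C 1 b t1 t2).
  assert (Hia : 0 < / a) by (apply Rinv_0_lt_compat; lra).
  assert (Hia' : 0 < / a') by (apply Rinv_0_lt_compat; lra).
  unfold Rdiv. split; split; intro H; nra.
Qed.

Lemma part2 : exists b tau1 tau2 : R, 0 < b /\ 0 < tau1 /\ 0 < tau2 /\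
      forall C a : R, 0 < C -> 0 < a -> mu2_queue C a b tau1 tau2 < 0.
Proof.
  exists (1/28), 1, 1. split; [lra|split; [lra|split; [lra|]]].
  intros C a HC Ha. pose proof PI_RGT_0.
  unfold mu2_queue, mu2.
  replace (omega_c 1 1) with (PI/(1+1)) by reflexivity.
  assert (Hal : alpha' (g_queue C a (1/28) 1 1) (kappa_c (atilde_q C a (1/28) 1 1) 1 1) 1 1 (PI/(1+1))
           = (15*a/8) * (PI/2) / (1 + PI*PI/4)).
  { unfold alpha'. rewrite f_b by auto. change (Taylor3 0 (-PI/4) 0 (-4*PI/(7*C)) (-32*PI/(15*C)) 0 0
          (-512*PI/(105*C^2)) (-256*PI/(5*C^2))) with (fb C).
    rewrite dchb, e1, g_queue_b by auto. crunch. unfold rcp_taylor, fb. cbn [t10 t01].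
    field. repeat split; nra. }
  rewrite Hal, f_b by auto.
  change (Taylor3 0 (-PI/4) 0 (-4*PI/(7*C)) (-32*PI/(15*C)) 0 0
          (-512*PI/(105*C^2)) (-256*PI/(5*C^2))) with (fb C).
  rewrite lyap_b by auto.
  assert (0 < (15*a/8) * (PI/2) / (1 + PI*PI/4)).
  { apply Rdiv_lt_0_compat; [|nra]. apply Rmult_lt_0_compat; lra. }
  assert (0 < 1 / 2 * (PI / C ^ 2) * (4129024 / 55125 + 3239168 / 55125 * (PI / 2)) / (1 + PI ^ 2 / 4)).
  { apply Rdiv_lt_0_compat; [|nra]. apply Rmult_lt_0_compat; [|lra]. apply Rmult_lt_0_compat; [lra|].
    apply Rdiv_lt_0_compat; [lra| apply pow_lt; lra]. }
  unfold Rdiv at 1. rewrite <- Ropp_mult_distr_l. apply Ropp_lt_gt_0_contravar.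
  apply Rmult_lt_0_compat; [lra| apply Rinv_0_lt_compat; lra].
Qed.

Theorem mainTheorem8 :
  (* (i) the sign of mu2 (criticality) does not depend on a *)
  (forall C a a' b tau1 tau2 : R,
      0 < C -> 0 < a -> 0 < a' -> 0 < b -> 0 < tau1 -> 0 < tau2 ->
      (0 < mu2_queue C a b tau1 tau2 <-> 0 < mu2_queue C a' b tau1 tau2) /\
      (mu2_queue C a b tau1 tau2 < 0 <-> mu2_queue C a' b tau1 tau2 < 0)) /\
  (* (ii) sub-critical Hopf bifurcations occur for some b, tau1, tau2 *)
  (exists b tau1 tau2 : R, 0 < b /\ 0 < tau1 /\ 0 < tau2 /\
      forall C a : R, 0 < C -> 0 < a -> mu2_queue C a b tau1 tau2 < 0) /\
  (* (iii) without queue feedback the bifurcation is always super-critical *)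
  (forall C a gamma tau1 tau2 : R,
      0 < C -> 0 < a -> 0 < gamma -> gamma <= 1 -> 0 < tau1 -> 0 < tau2 ->
      0 < mu2_noqueue C a gamma tau1 tau2).
Proof.
  split; [exact part1|]. split; [exact part2|exact part3].
Qed.
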